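(* For every finite field extension $\mathbb{K}/\mathbb{Q}$ with $\mathbb{K}$ real (embeddable in $\mathbb{R}$), there exists a finite set $\mathcal{I}$ of CI constraints such that the semidefinite model $\mathcal{K}^-_{\mathbb{R}}(\mathcal{I})$ is non-empty and for every $\Sigma\in\mathcal{K}^-_{\mathbb{R}}(\mathcal{I})$ the subfield of $\mathbb{R}$ generated by the entries of $\Sigma$ admits a field embedding of $\mathbb{K}$. That is, all real algebraic numbers are necessary to witness the non-emptiness of (semidefinite) Gaussian CI models.
   Context: Let $\mathsf{N}$ be a finite ground set. A CI statement is a symbol $(\mathsf{ij}|\mathsf{K})$ with $\mathsf{i}\neq\mathsf{j}\in\mathsf{N}$, $\mathsf{K}\subseteq\mathsf{N}\setminus\{\mathsf{i},\mathsf{j}\}$. For a symmetric matrix $\Sigma$ write $[\mathsf{L}:\Sigma]=\det\Sigma_{\mathsf{L}}$ (with $\det$ of the empty matrix equal to $1$) and $[\mathsf{ij}|\mathsf{L}:\Sigma]=\det\Sigma_{\mathsf{i}\mathsf{L},\mathsf{j}\mathsf{L}}$. For a real positive-semidefinite symmetric $\Sigma$, the statement $(\mathsf{ij}|\mathsf{K})$ holds iff $[\mathsf{ij}|\mathsf{L}:\Sigma]=0$ for a subset $\mathsf{L}\subseteq\mathsf{K}$ with $[\mathsf{L}:\Sigma]\neq0$ and $\operatorname{rk}\Sigma_{\mathsf{L}}=\operatorname{rk}\Sigma_{\mathsf{K}}$ (this does not depend on the choice of such $\mathsf{L}$). A set of CI constraints $\mathcal{I}$ consists of statements $(\mathsf{ij}|\mathsf{K})$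 and negations $\neg(\mathsf{ij}|\mathsf{K})$, the latter holding iff the statement does not hold. The semidefinite model $\mathcal{K}^-_{\mathbb{R}}(\mathcal{I})$ is the set of all real positive-semidefinite symmetric $\mathsf{N}\times\mathsf{N}$ matrices satisfying all constraints in $\mathcal{I}$ in this sense. *)

(* Defs.v *)
From HB Require Import structures.
From mathcomp Require Import all_boot all_order all_algebra all_field.
From mathcomp Require Import reals.
Set Implicit Arguments. Unset Strict Implicit. Unset Printing Implicit Defensive.
Import Order.TTheory GRing.Theory Num.Theory.
Local Open Scope ring_scope.

(* Ground set N = 'I_n.  A CI constraint is (b, i, j, K):
   b = true  : the statement (ij|K);  b = false : its negation. *)
Definition ci_constraint (n : nat) : Type :=
  (bool * 'I_n * 'I_n * {set 'I_n})%type.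

Definition ci_wf n (c : ci_constraint n) : bool :=
  let: (_, i, j, K) := c in [&& i != j, i \notin K & j \notin K].

Definition princ_sub (R : pzRingType) n (S : 'M[R]_n) (L : {set 'I_n})
  : 'M[R]_#|L| :=
  \matrix_(a < #|L|, b < #|L|) S (enum_val a) (enum_val b).

Definition ext_index n (i : 'I_n) (L : {set 'I_n}) (a : 'I_(1 + #|L|)) : 'I_n :=
  match split a with inl _ => i | inr b => enum_val b end.

Definition almost_princ_sub (R : pzRingType) n (S : 'M[R]_n) (i j : 'I_n)
  (L : {set 'I_n}) : 'M[R]_(1 + #|L|) :=
  \matrix_(a < 1 + #|L|, b < 1 + #|L|) S (@ext_index n i L a) (@ext_index n j L b).

Definition minorL (R : comPzRingType) n (S : 'M[R]_n) L := \det (princ_sub S L).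
Definition minor_ijL (R : comPzRingType) n (S : 'M[R]_n) i j L :=
  \det (almost_princ_sub S i j L).

Definition ci_holds (R : fieldType) n (S : 'M[R]_n) (i j : 'I_n)
  (K : {set 'I_n}) : Prop :=
  exists L : {set 'I_n},
    [/\ L \subset K, minorL S L != 0,
        \rank (princ_sub S L) = \rank (princ_sub S K) & minor_ijL S i j L = 0].

Definition constraint_holds (R : fieldType) n (S : 'M[R]_n)
  (c : ci_constraint n) : Prop :=
  let: (b, i, j, K) := c in
  if b then ci_holds S i j K else ~ ci_holds S i j K.

Definition psd (R : realType) n (S : 'M[R]_n) : Prop :=
  S^T = S /\ forall v : 'cV[R]_n, 0 <= (v^T *m S *m v) 0 0.

Definition in_sd_model (R : realType) n (I : seq (ci_constraint n))
  (S : 'M[R]_n) : Prop :=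
  psd S /\ forall c, c \in I -> constraint_holds S c.

Definition in_gen_subfield (R : fieldType) (A : R -> Prop) (x : R) : Prop :=
  forall P : R -> Prop,
    P 1 ->
    (forall y z, P y -> P z -> P (y - z)) ->
    (forall y z, P y -> P z -> P (y * z)) ->
    (forall y, P y -> P y^-1) ->
    (forall y, A y -> P y) ->
    P x.

Definition entries (R : Type) n (S : 'M[R]_n) : R -> Prop :=
  fun x => exists i j, S i j = x.

(* Main.v *)
Require Import Defs.
From HB Require Import structures.
From mathcomp Require Import all_boot all_order all_algebra all_field.
From mathcomp Require Import reals.
From mathcomp Require Import ring.
Set Implicit Arguments. Unset Strict Implicit. Unset Printing Implicit Defensive.
Import Order.TTheory GRing.Theory Num.Theory.
Local Open Scope ring_scope.
Inductive PH (d : nat) := Chi of 'I_d | Eta of 'I_d & 'I_d.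
Arguments Chi {d}. Arguments Eta {d}.
Definition PH_enc d (x : PH d) : 'I_d + ('I_d * 'I_d) :=
  match x with Chi a => inl a | Eta i c => inr (i, c) end.
Definition PH_dec d (x : 'I_d + ('I_d * 'I_d)) : PH d :=
  match x with inl a => Chi a | inr (i, c) => Eta i c end.
Lemma PH_encK d : cancel (@PH_enc d) (@PH_dec d). Proof. by case. Qed.
HB.instance Definition _ d := Equality.copy (PH d) (can_type (@PH_encK d)).
HB.instance Definition _ d := Choice.copy (PH d) (can_type (@PH_encK d)).
HB.instance Definition _ d := Countable.copy (PH d) (can_type (@PH_encK d)).
HB.instance Definition _ d := Finite.copy (PH d) (can_type (@PH_encK d)).

Inductive Hub (d Nu : nat) := HP of PH d | HU of 'I_Nu.
Arguments HP {d Nu}. Arguments HU {d Nu}.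
Definition Hub_enc d Nu (x : Hub d Nu) : PH d + 'I_Nu :=
  match x with HP h => inl h | HU j => inr j end.
Definition Hub_dec d Nu (x : PH d + 'I_Nu) : Hub d Nu :=
  match x with inl h => HP h | inr j => HU j end.
Lemma Hub_encK d Nu : cancel (@Hub_enc d Nu) (@Hub_dec d Nu). Proof. by case. Qed.
HB.instance Definition _ d Nu := Equality.copy (Hub d Nu) (can_type (@Hub_encK d Nu)).
HB.instance Definition _ d Nu := Choice.copy (Hub d Nu) (can_type (@Hub_encK d Nu)).
HB.instance Definition _ d Nu := Countable.copy (Hub d Nu) (can_type (@Hub_encK d Nu)).
HB.instance Definition _ d Nu := Finite.copy (Hub d Nu) (can_type (@Hub_encK d Nu)).

Inductive Ones (d : nat) := Ob | O0 | Oh of PH d.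
Arguments Ob {d}. Arguments O0 {d}. Arguments Oh {d}.
Definition Ones_enc d (x : Ones d) : option (option (PH d)) :=
  match x with Ob => None | O0 => Some None | Oh h => Some (Some h) end.
Definition Ones_dec d (x : option (option (PH d))) : Ones d :=
  match x with None => Ob | Some None => O0 | Some (Some h) => Oh h end.
Lemma Ones_encK d : cancel (@Ones_enc d) (@Ones_dec d). Proof. by case. Qed.
HB.instance Definition _ d := Equality.copy (Ones d) (can_type (@Ones_encK d)).
HB.instance Definition _ d := Choice.copy (Ones d) (can_type (@Ones_encK d)).
HB.instance Definition _ d := Countable.copy (Ones d) (can_type (@Ones_encK d)).
HB.instance Definition _ d := Finite.copy (Ones d) (can_type (@Ones_encK d)).

Inductive NH (d : nat) := NT | NP | NO of Ones d | NC of 'I_d & 'I_d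
  | NV of 'I_d & 'I_d & 'I_d.
Arguments NT {d}. Arguments NP {d}. Arguments NO {d}. Arguments NC {d}. Arguments NV {d}.
Definition NH_enc d (x : NH d) :
   (bool + Ones d) + (('I_d * 'I_d) + ('I_d * 'I_d * 'I_d)) :=
  match x with NT => inl (inl false) | NP => inl (inl true) | NO o => inl (inr o)
  | NC i c => inr (inl (i, c)) | NV i c c' => inr (inr (i, c, c')) end.
Definition NH_dec d (x : (bool + Ones d) + (('I_d * 'I_d) + ('I_d * 'I_d * 'I_d))) : NH d :=
  match x with inl (inl false) => NT | inl (inl true) => NP | inl (inr o) => NO o
  | inr (inl (i, c)) => NC i c | inr (inr (i, c, c')) => NV i c c' end.
Lemma NH_encK d : cancel (@NH_enc d) (@NH_dec d). Proof. by case. Qed.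
HB.instance Definition _ d := Equality.copy (NH d) (can_type (@NH_encK d)).
HB.instance Definition _ d := Choice.copy (NH d) (can_type (@NH_encK d)).
HB.instance Definition _ d := Countable.copy (NH d) (can_type (@NH_encK d)).
HB.instance Definition _ d := Finite.copy (NH d) (can_type (@NH_encK d)).

Definition Vx d Nu : finType := (Hub d Nu + NH d)%type.

Lemma PH_decK d : cancel (@PH_dec d) (@PH_enc d). Proof. by case => [a|[i c]]. Qed.

Lemma sum_PH (R : nmodType) d (G : PH d -> R) :
  \sum_(h : PH d) G h = \sum_a G (Chi a) + \sum_i \sum_c G (Eta i c).
Proof.
rewrite (reindex (@PH_dec d)); last first.
  by exists (@PH_enc d) => x _; [apply: PH_decK | apply: PH_encK].
rewrite big_sumType /=; congr (_ + _).
rewrite pair_big; apply: eq_bigr => -[i c] _ //.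
Qed.
Section Generic.
Variable F : fieldType.

Lemma schur_det k (a : F) (r : 'rV[F]_k) (c : 'cV[F]_k) (D D' : 'M[F]_k) :
  D *m D' = 1%:M ->
  \det (block_mx a%:M r c D) = (a - (r *m D' *m c) 0 0) * \det D.
Proof.
move=> DD'.
have -> : block_mx a%:M r c D = block_mx (a%:M - r *m D' *m c) r 0 D *m
     block_mx 1%:M 0 (D' *m c) 1%:M.
  rewrite mulmx_block !mulmx0 !mulmx1 ?mul0mx ?add0r ?addr0.
  by rewrite [D *m _]mulmxA DD' mul1mx [r *m (D' *m c)]mulmxA subrK.
rewrite det_mulmx det_ublock det_lblock !det1 mulr1 det_mx11 [in RHS]mxE !mxE eqxx mulr1n.
by rewrite mulr1.
Qed.

Lemma apsE n (S : 'M[F]_n) i j (K : {set 'I_n}) :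
  almost_princ_sub S i j K =
  block_mx (S i j)%:M (\row_b S i (enum_val b)) (\col_a S (enum_val a) j)
     (princ_sub S K).
Proof.
apply/matrixP => a b; rewrite -(splitK a) -(splitK b).
case: (split a) => a'; case: (split b) => b';
  rewrite mxE /ext_index !unsplitK /=.
- by rewrite block_mxEul [a']ord1 [b']ord1 mxE eqxx mulr1n.
- by rewrite (@block_mxEur _ 1 #|K| 1 #|K|) mxE.
- by rewrite (@block_mxEdl _ 1 #|K| 1 #|K|) mxE.
- by rewrite (@block_mxEdr _ 1 #|K| 1 #|K|) mxE.
Qed.

Variable n : nat.
Variable S : 'M[F]_n.
Variable K : {set 'I_n}.
Hypothesis orth : forall h h', h \in K -> h' \in K -> h != h' -> S h h' = 0.
Hypothesis dnz : forall h, h \in K -> S h h != 0.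

Let D := princ_sub S K.
Let D' := diag_mx (\row_b (S (enum_val b) (enum_val b))^-1 : 'rV[F]_#|K|).

Lemma princ_diag : D = diag_mx (\row_b S (enum_val b) (enum_val b)).
Proof.
apply/matrixP => a b; rewrite !mxE.
have [<-|ab] := eqVneq a b; first by rewrite mulr1n.
rewrite mulr0n orth ?enum_valP //.
by apply: contra ab => /eqP /enum_val_inj ->.
Qed.

Lemma DD' : D *m D' = 1%:M.
Proof.
rewrite princ_diag mul_mx_diag; apply/matrixP => a b; rewrite !mxE.
have [<-|ab] := eqVneq a b; first by rewrite mulr1n mulfV // dnz ?enum_valP.
by rewrite !mulr0n mul0r.
Qed.

Lemma detD : \det D = \prod_(h in K) S h h.
Proof.
by rewrite princ_diag det_diag (big_enum_val (fun h => S h h)); apply: eq_bigr => b _; rewrite mxE.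
Qed.

Lemma detD_neq0 : \det D != 0.
Proof. by rewrite detD; apply/prodf_neq0 => h hK; apply: dnz. Qed.

Lemma det_aps i j : minor_ijL S i j K =
  (S i j - \sum_(h in K) S i h * S h j / S h h) * \det D.
Proof.
rewrite /minor_ijL apsE (@schur_det _ _ _ _ _ D') ?DD' //; congr ((_ - _) * _).
rewrite mul_mx_diag mxE (big_enum_val (fun h => S i h * S h j / S h h)).
by apply: eq_bigr => b _; rewrite !mxE mulrAC.
Qed.

Lemma ci_holds_diag i j :
  ci_holds S i j K <-> S i j = \sum_(h in K) S i h * S h j / S h h.
Proof.
have rK : \rank D = #|K|.
  by apply: mxrank_unit; rewrite unitmxE unitfE detD_neq0.
split.
- case=> L [LK _ rL mL].
  have eLK : L = K.
    apply/eqP; rewrite eqEcard LK /=.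
    by rewrite -rK -rL rank_leq_row.
  move: mL; rewrite eLK det_aps => /eqP; rewrite mulf_eq0 (negbTE detD_neq0) orbF.
  by rewrite subr_eq0 => /eqP.
- move=> e; exists K; split => //.
  + exact: detD_neq0.
  + by rewrite det_aps e subrr mul0r.
Qed.
End Generic.
Lemma ci_empty (F : fieldType) n (S : 'M[F]_n) i j :
  ci_holds S i j set0 <-> S i j = 0.
Proof.
rewrite ci_holds_diag ?big_set0 //; by move=> h; rewrite in_set0.
Qed.

Lemma ci_single_nz (F : fieldType) n (S : 'M[F]_n) i j h :
  ci_holds S i j [set h] -> S i j != 0 -> S h h != 0.
Proof.
case=> L [LK mL _ mij] nz.
move: LK; rewrite subset1 => /orP[] /eqP eL; last first.
  have o0 : forall h1 h2 : 'I_n, h1 \in set0 -> h2 \in set0 -> h1 != h2 -> S h1 h2 = 0.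
    by move=> h1 h2; rewrite in_set0.
  have d0 : forall h1 : 'I_n, h1 \in set0 -> S h1 h1 != 0 by move=> h1; rewrite in_set0.
  move: mij; rewrite eL (det_aps o0 d0) (detD o0) !big_set0 subr0 mulr1 => e.
  by rewrite e eqxx in nz.
have o1 : forall h1 h2 : 'I_n, h1 \in [set h] -> h2 \in [set h] -> h1 != h2 -> S h1 h2 = 0.
  by move=> h1 h2; rewrite !in_set1 => /eqP -> /eqP ->; rewrite eqxx.
by move: mL; rewrite eL /minorL (detD o1) big_set1.
Qed.
Section Subfield.
Variable F : fieldType.
Variable A : F -> Prop.
Local Notation G := (in_gen_subfield A).

Lemma igs_base x : A x -> G x.
Proof. by move=> Ax P _ _ _ _ HA; apply: HA. Qed.
Lemma igs1 : G 1. Proof. by move=> P H1. Qed.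
Lemma igsB x y : G x -> G y -> G (x - y).
Proof. by move=> Gx Gy P H1 Hs HM HV HA; apply: (Hs); [exact: (Gx P H1 Hs HM HV HA) | exact: (Gy P H1 Hs HM HV HA)]. Qed.
Lemma igsM x y : G x -> G y -> G (x * y).
Proof. by move=> Gx Gy P H1 Hs HM HV HA; apply: (HM); [exact: (Gx P H1 Hs HM HV HA) | exact: (Gy P H1 Hs HM HV HA)]. Qed.
Lemma igsV x : G x -> G x^-1.
Proof. by move=> Gx P H1 Hs HM HV HA; apply: (HV); exact: (Gx P H1 Hs HM HV HA). Qed.
Lemma igs0 : G 0. Proof. by rewrite -(subrr 1); apply: igsB; apply: igs1. Qed.
Lemma igsN x : G x -> G (- x). Proof. by move=> Gx; rewrite -sub0r; apply: igsB => //; apply: igs0. Qed.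
Lemma igsD x y : G x -> G y -> G (x + y).
Proof. by move=> Gx Gy; rewrite -[y]opprK; apply: igsB => //; apply: igsN. Qed.
Lemma igs_div x y : G x -> G y -> G (x / y).
Proof. by move=> Gx Gy; apply: igsM => //; apply: igsV. Qed.
Lemma igs_nat k : G k%:R.
Proof. elim: k => [|k IH]; first exact: igs0. by rewrite -addn1 natrD; apply: igsD => //; apply: igs1. Qed.
Lemma igs_int (k : int) : G k%:~R.
Proof. case: k => k; first exact: igs_nat. by rewrite NegzE mulrNz; apply: igsN; apply: igs_nat. Qed.
Lemma igs_sum (I : finType) (f : I -> F) : (forall i, G (f i)) -> G (\sum_i f i).
Proof.
move=> Hf; apply: (big_ind G) => //; [exact: igs0 | move=> x y; exact: igsD].
Qed.
End Subfield.

Lemma igs_rat (F : numFieldType) (A : F -> Prop) (q : rat) : in_gen_subfield A (ratr q).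
Proof. by rewrite /ratr; apply: igs_div; apply: igs_int. Qed.
Section Construction.
Variables (d Nu D : nat) (N : 'I_d -> 'I_d -> 'I_d -> int) (a0 : 'I_d).

Local Notation V := (Vx d Nu).
Local Notation HubT := (Hub d Nu).
Definition nn := #|V|.
Definition enc (u : V) : 'I_nn := enum_rank u.
Definition hv (h : HubT) : V := inl h.
Definition nv (x : NH d) : V := inr x.

Lemma enc_inj : injective enc. Proof. exact: enum_rank_inj. Qed.

Definition mk (b : bool) (u v : V) (A : {set HubT}) : ci_constraint nn :=
  (b, enc u, enc v, [set enc (hv h) | h in A]).

Definition ncoef (i c : 'I_d) (h : PH d) : int :=
  match h with Chi a => - N i c a | Eta i' c' => if (i' == i) && (c' == c) then D%:Z else 0 end.
Definition pos (z : int) : nat := match z with Posz k => k | Negz _ => 0 end.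
Definition neg (z : int) : nat := match z with Posz _ => 0 | Negz k => k.+1 end.
Definition Uset (k : nat) : {set HubT} := [set HU j | j in [pred j : 'I_Nu | (j < k)%N]].
Definition PHset : {set HubT} := [set HP h | h : PH d].

Definition L1 := [seq mk true (hv h) (hv h') set0 | h <- enum {: HubT}, h' <- [seq h' <- enum {: HubT} | h' != h]].
Definition L2 := [seq mk false (nv NT) (hv h) set0 | h <- enum {: HubT}].
Definition L3 := [seq mk true (nv NT) (nv (NO o)) [set h] | o <- enum {: Ones d}, h <- enum {: HubT}].
Definition L4 := [seq mk false (nv NT) (nv (NO o)) set0 | o <- enum {: Ones d}].
Definition L5 := [seq mk true (nv (NO O0)) (nv (NO Ob)) [set h] | h <- enum {: HubT}].
Definition L6 := [:: mk true (nv NP) (nv (NO O0)) [set HP (Chi a0)]; mk false (nv NP) (nv (NO O0)) set0].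
Definition L7ic (i c : 'I_d) :=
  [seq mk true (nv (NC i c)) (nv (NO O0)) [set HU j] | j <- enum {: 'I_Nu}] ++
  [:: mk false (nv (NC i c)) (nv (NO O0)) set0;
      mk true (nv NP) (nv (NC i c)) set0;
      mk true (nv NP) (nv (NC i c)) PHset] ++
  [seq mk true (nv (NC i c)) (nv (NO (Oh h))) (HP h |: Uset (neg (ncoef i c h))) | h <- enum {: PH d}] ++
  [seq mk true (nv (NC i c)) (nv (NO (Oh h))) (Uset (pos (ncoef i c h))) | h <- enum {: PH d}].
Definition L8icc (i c c' : 'I_d) :=
  [:: mk true (nv NP) (nv (NV i c c')) set0;
      mk true (nv NP) (nv (NV i c c')) [set HP (Chi c); HP (Eta i c)];
      mk true (nv NP) (nv (NV i c c')) [set HP (Chi c'); HP (Eta i c')];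
      mk true (nv (NV i c c')) (nv (NO O0)) [set HP (Chi c)];
      mk true (nv (NV i c c')) (nv (NO O0)) [set HP (Chi c')];
      mk true (nv (NV i c c')) (nv (NO Ob)) [set HP (Eta i c)];
      mk true (nv (NV i c c')) (nv (NO Ob)) [set HP (Eta i c')];
      mk false (nv (NV i c c')) (nv (NO O0)) set0].
Definition L7 := flatten [seq L7ic t.1 t.2 | t <- enum {: 'I_d * 'I_d}].
Definition L8 := flatten [seq L8icc t.1.1 t.1.2 t.2 | t <- enum {: 'I_d * 'I_d * 'I_d}].
Definition I0 := L1 ++ L2 ++ L3 ++ L4 ++ L5 ++ L6 ++ L7 ++ L8.
Definition II := [seq c <- I0 | ci_wf c].

Lemma II_wf : all (@ci_wf nn) II.
Proof. by apply/allP => c; rewrite mem_filter => /andP[]. Qed.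

Lemma wf_NN b (x y : NH d) A : x != y -> ci_wf (mk b (nv x) (nv y) A).
Proof.
move=> xy; rewrite /ci_wf /mk (inj_eq enc_inj) (inj_eq (@inr_inj _ _)) xy /=.
by apply/andP; split; apply/imsetP => -[h _] /enc_inj.
Qed.

Lemma inII c : c \in I0 -> ci_wf c -> c \in II.
Proof. by move=> h w; rewrite mem_filter w h. Qed.

Section Sem.
Variable F : fieldType.
Variable S : 'M[F]_nn.
Local Notation s u v := (S (enc u) (enc v)).

Lemma imset0' : [set enc (hv h) | h in (set0 : {set HubT})] = set0.
Proof. by rewrite imset0. Qed.

Lemma vci_true0 u v : constraint_holds S (mk true u v set0) <-> s u v = 0.
Proof. by rewrite /constraint_holds /mk imset0' ci_empty. Qed.

Lemma vci_false0 u v : constraint_holds S (mk false u v set0) <-> s u v != 0.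
Proof.
rewrite /constraint_holds /mk imset0'; split.
  by move=> H; apply/eqP => e; apply: H; apply/ci_empty.
by move=> /eqP H /ci_empty.
Qed.

Hypothesis horth : forall h h', h != h' -> s (hv h) (hv h') = 0.
Hypothesis hdiag : forall h, s (hv h) (hv h) != 0.

Lemma vci_true u v A : constraint_holds S (mk true u v A) <->
  s u v = \sum_(h in A) s u (hv h) * s (hv h) v / s (hv h) (hv h).
Proof.
rewrite /constraint_holds /mk ci_holds_diag.
- rewrite big_imset //=; by move=> x y _ _ /enc_inj [].
- move=> k k' /imsetP[h _ ->] /imsetP[h' _ ->] kk'; apply: horth.
  by apply: contra kk' => /eqP ->.
- by move=> k /imsetP[h _ ->].
Qed.
End Sem.
Lemma wf_HH b h h' : h != h' -> ci_wf (mk b (hv h) (hv h') set0).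
Proof.
move=> hh; rewrite /ci_wf /mk (inj_eq enc_inj) (inj_eq (@inl_inj _ _)) hh /= imset0.
by rewrite !in_set0.
Qed.
Lemma wf_NH b x h : ci_wf (mk b (nv x) (hv h) set0).
Proof. by rewrite /ci_wf /mk (inj_eq enc_inj) imset0 !in_set0. Qed.

Ltac inI0 n := rewrite /I0 !mem_cat; do n apply/orP; right; apply/orP; left.

Lemma inL1 h h' : h' != h -> mk true (hv h) (hv h') set0 \in I0.
Proof.
move=> hh; rewrite /I0 mem_cat; apply/orP; left.
apply: (allpairs_f_dep (fun h h' => mk true (hv h) (hv h') set0)).
  by rewrite mem_enum. by rewrite mem_filter hh mem_enum.
Qed.
Lemma inL2 h : mk false (nv NT) (hv h) set0 \in I0.
Proof.
have H : mk false (nv NT) (hv h) set0 \in L2.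
  by rewrite (map_f (fun h => mk false (nv NT) (hv h) set0)) // mem_enum.
by rewrite /I0 !mem_cat H ?(orTb, orbT).
Qed.
Lemma inL3 o h : mk true (nv NT) (nv (NO o)) [set h] \in I0.
Proof.
have H : mk true (nv NT) (nv (NO o)) [set h] \in L3.
  by rewrite (allpairs_f (fun o h => mk true (nv NT) (nv (NO o)) [set h])) // mem_enum.
by rewrite /I0 !mem_cat H ?(orTb, orbT).
Qed.
Lemma inL4 o : mk false (nv NT) (nv (NO o)) set0 \in I0.
Proof.
have H : mk false (nv NT) (nv (NO o)) set0 \in L4.
  by rewrite (map_f (fun o => mk false (nv NT) (nv (NO o)) set0)) // mem_enum.
by rewrite /I0 !mem_cat H ?(orTb, orbT).
Qed.
Lemma inL5 h : mk true (nv (NO O0)) (nv (NO Ob)) [set h] \in I0.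
Proof.
have H : mk true (nv (NO O0)) (nv (NO Ob)) [set h] \in L5.
  by rewrite (map_f (fun h => mk true (nv (NO O0)) (nv (NO Ob)) [set h])) // mem_enum.
by rewrite /I0 !mem_cat H ?(orTb, orbT).
Qed.
Lemma inL6 c : c \in L6 -> c \in I0.
Proof. by move=> H; rewrite /I0 !mem_cat H ?(orTb, orbT). Qed.
Lemma inL7 i c x : x \in L7ic i c -> x \in I0.
Proof.
move=> H; rewrite /I0 !mem_cat; apply/orP; right; apply/orP; right; apply/orP; right.
apply/orP; right; apply/orP; right; apply/orP; right; apply/orP; left.
by apply/flatten_mapP; exists (i, c); rewrite ?mem_enum.
Qed.
Lemma inL8 i c c' x : x \in L8icc i c c' -> x \in I0.
Proof.
move=> H; rewrite /I0 !mem_cat; apply/orP; right; apply/orP; right; apply/orP; right.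
apply/orP; right; apply/orP; right; apply/orP; right; apply/orP; right.
by apply/flatten_mapP; exists (i, c, c'); rewrite ?mem_enum.
Qed.
Lemma card_lt k : (k <= Nu)%N -> #|[pred j : 'I_Nu | (j < k)%N]| = k.
Proof.
move=> Hk; have e := @big_ord_widen nat 0%N addn k Nu (fun _ => 1%N) Hk.
transitivity (\sum_(i < Nu | (i < k)%N) 1)%N; first by rewrite sum1_card.
by rewrite -e sum1_card card_ord.
Qed.

Lemma sum_Uset (R : nmodType) k (G : HubT -> R) c0 : (k <= Nu)%N ->
  (forall j, G (HU j) = c0) -> \sum_(h in Uset k) G h = c0 *+ k.
Proof.
move=> Hk HG; rewrite big_imset /=; last by move=> x y _ _ [].
by rewrite (eq_bigr (fun _ => c0)) // sumr_const card_lt.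
Qed.

Lemma pos_neg (R : pzRingType) (w : int) : (w%:~R : R) = (pos w)%:R - (neg w)%:R.
Proof. by case: w => k /=; rewrite ?subr0 // NegzE mulrNz sub0r. Qed.

Lemma HP_notin_U h k : HP h \notin Uset k.
Proof. by apply/imsetP => -[j _]. Qed.
Section Forcing.
Variable R : realType.
Variable S : 'M[R]_nn.
Hypothesis HS : in_sd_model II S.
Local Notation s u v := (S (enc u) (enc v)).

Lemma Ssym u v : s u v = s v u.
Proof. by case: HS => [[St _] _]; rewrite -[in LHS]St mxE. Qed.

Lemma hold c : c \in I0 -> ci_wf c -> constraint_holds S c.
Proof. by move=> h w; case: HS => _ ; apply; apply: inII. Qed.

Lemma f1 h h' : h != h' -> s (hv h) (hv h') = 0.
Proof.
move=> hh; apply/(vci_true0 S); apply: hold; first by apply: inL1; rewrite eq_sym.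
exact: wf_HH.
Qed.

Lemma f2 h : s (nv NT) (hv h) != 0.
Proof. by apply/(vci_false0 S); apply: hold; [apply: inL2 | apply: wf_NH]. Qed.

Lemma f4 o : s (nv NT) (nv (NO o)) != 0.
Proof. by apply/(vci_false0 S); apply: hold; [apply: inL4 | by apply: wf_NN]. Qed.

Lemma f3 h : s (hv h) (hv h) != 0.
Proof.
have := hold (inL3 O0 h) (@wf_NN _ NT (NO O0) _ isT); rewrite /constraint_holds /mk imset_set1 => H.
exact: (ci_single_nz H (f4 O0)).
Qed.

Lemma st u v A : mk true u v A \in I0 -> ci_wf (mk true u v A) ->
  s u v = \sum_(h in A) s u (hv h) * s (hv h) v / s (hv h) (hv h).
Proof. by move=> h w; apply/(vci_true f1 f3); apply: hold. Qed.

Lemma stN (x y : NH d) A : mk true (nv x) (nv y) A \in I0 -> x != y ->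
  s (nv x) (nv y) = \sum_(h in A) s (nv x) (hv h) * s (hv h) (nv y) / s (hv h) (hv h).
Proof. by move=> h w; apply: st => //; apply: wf_NN. Qed.

Definition t h := s (nv NT) (hv h).
Definition z u h := s u (hv h) / t h.
Definition sTO o := s (nv NT) (nv (NO o)).
Definition m := sTO O0 * sTO Ob / s (nv (NO O0)) (nv (NO Ob)).

Lemma L3eq o h : sTO o = t h * s (hv h) (nv (NO o)) / s (hv h) (hv h).
Proof. by rewrite /sTO (stN (inL3 o h) isT) big_set1. Qed.

Lemma zO o h : z (nv (NO o)) h = sTO o * s (hv h) (hv h) / t h ^+ 2.
Proof.
have th := f2 h; have hh := f3 h.
rewrite /z (L3eq o h) Ssym /t. field. by rewrite th hh.
Qed.

Lemma hh_eq h : s (hv h) (hv h) * m = t h ^+ 2.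
Proof.
have th := f2 h; have hh := f3 h; have t0 := f4 O0; have tb := f4 Ob.
have e := stN (inL5 h) isT; rewrite big_set1 in e.
have e1 : s (nv (NO O0)) (hv h) = sTO O0 * s (hv h) (hv h) / t h.
  by rewrite -[LHS](divfK th) -/(z _ h) zO /t; field; rewrite th.
have e2 : s (hv h) (nv (NO Ob)) = sTO Ob * s (hv h) (hv h) / t h.
  by rewrite Ssym -[LHS](divfK th) -/(z _ h) zO /t; field; rewrite th.
rewrite e1 e2 in e.
have oo : s (nv (NO O0)) (nv (NO Ob)) != 0.
  rewrite e; apply: mulf_neq0; first apply: mulf_neq0; rewrite ?invr_eq0 //.
    by apply: mulf_neq0; [apply: mulf_neq0 | rewrite invr_eq0].
  by apply: mulf_neq0; [apply: mulf_neq0 | rewrite invr_eq0].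
rewrite /m e /sTO /t. field. by rewrite th hh t0 tb.
Qed.

Lemma m_neq0 : m != 0.
Proof.
have := hh_eq (HP (Chi a0)); have := f2 (HP (Chi a0)); rewrite /t => th.
by move=> e; apply: contraNneq th => m0; move: e; rewrite m0 mulr0 => /esym /eqP; rewrite expf_eq0 /=.
Qed.

Lemma KL (x y : NH d) A : mk true (nv x) (nv y) A \in I0 -> x != y ->
  s (nv x) (nv y) = m * \sum_(h in A) z (nv x) h * z (nv y) h.
Proof.
move=> hI xy; rewrite (stN hI xy) mulr_sumr; apply: eq_bigr => h _.
have th := f2 h; have hh := f3 h; have m0 := m_neq0; have e := hh_eq h.
have -> : s (hv h) (hv h) = t h ^+ 2 / m by rewrite -e mulfK.
rewrite (Ssym (hv h)) /z /t; field; by rewrite th m0.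
Qed.

Lemma zO' o h : z (nv (NO o)) h = sTO o / m.
Proof.
have th := f2 h; have m0 := m_neq0; have e := hh_eq h.
rewrite zO; have -> : s (hv h) (hv h) = t h ^+ 2 / m by rewrite -e mulfK.
rewrite /t; field; by rewrite th m0.
Qed.

Lemma KLO (x : NH d) o A : mk true (nv x) (nv (NO o)) A \in I0 -> x != NO o ->
  s (nv x) (nv (NO o)) = sTO o * \sum_(h in A) z (nv x) h.
Proof.
move=> hI xy; rewrite (KL hI xy) mulr_sumr mulr_sumr; apply: eq_bigr => h _.
rewrite zO'; have m0 := m_neq0; field; by rewrite m0.
Qed.
Lemma inC1 i c j : mk true (nv (NC i c)) (nv (NO O0)) [set HU j] \in I0.
Proof.
apply: (inL7 (i := i) (c := c)); rewrite /L7ic mem_cat; apply/orP; left.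
by rewrite (map_f (fun j => mk true (nv (NC i c)) (nv (NO O0)) [set HU j])) // mem_enum.
Qed.
Lemma inC2 i c : mk false (nv (NC i c)) (nv (NO O0)) set0 \in I0.
Proof. by apply: (inL7 (i := i) (c := c)); rewrite /L7ic !mem_cat !in_cons eqxx ?orbT. Qed.
Lemma inC3 i c : mk true (nv NP) (nv (NC i c)) set0 \in I0.
Proof. by apply: (inL7 (i := i) (c := c)); rewrite /L7ic !mem_cat !in_cons eqxx ?orbT. Qed.
Lemma inC4 i c : mk true (nv NP) (nv (NC i c)) PHset \in I0.
Proof. by apply: (inL7 (i := i) (c := c)); rewrite /L7ic !mem_cat !in_cons eqxx ?orbT. Qed.
Lemma inC5 i c h : mk true (nv (NC i c)) (nv (NO (Oh h))) (HP h |: Uset (neg (ncoef i c h))) \in I0.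
Proof.
apply: (inL7 (i := i) (c := c)); rewrite /L7ic !mem_cat.
by rewrite (map_f (fun h => mk true (nv (NC i c)) (nv (NO (Oh h))) (HP h |: Uset (neg (ncoef i c h))))) ?orbT // mem_enum.
Qed.
Lemma inC6 i c h : mk true (nv (NC i c)) (nv (NO (Oh h))) (Uset (pos (ncoef i c h))) \in I0.
Proof.
apply: (inL7 (i := i) (c := c)); rewrite /L7ic !mem_cat.
by rewrite (map_f (fun h => mk true (nv (NC i c)) (nv (NO (Oh h))) (Uset (pos (ncoef i c h))))) ?orbT // mem_enum.
Qed.
Lemma inV1 i c c' : mk true (nv NP) (nv (NV i c c')) set0 \in I0. Proof. by apply: (inL8 (i:=i) (c:=c) (c':=c')); rewrite /L8icc !in_cons eqxx ?orbT. Qed.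
Lemma inV2 i c c' : mk true (nv NP) (nv (NV i c c')) [set HP (Chi c); HP (Eta i c)] \in I0. Proof. by apply: (inL8 (i:=i) (c:=c) (c':=c')); rewrite /L8icc !in_cons eqxx ?orbT. Qed.
Lemma inV3 i c c' : mk true (nv NP) (nv (NV i c c')) [set HP (Chi c'); HP (Eta i c')] \in I0. Proof. by apply: (inL8 (i:=i) (c:=c) (c':=c')); rewrite /L8icc !in_cons eqxx ?orbT. Qed.
Lemma inV4 i c c' : mk true (nv (NV i c c')) (nv (NO O0)) [set HP (Chi c)] \in I0. Proof. by apply: (inL8 (i:=i) (c:=c) (c':=c')); rewrite /L8icc !in_cons eqxx ?orbT. Qed.
Lemma inV5 i c c' : mk true (nv (NV i c c')) (nv (NO O0)) [set HP (Chi c')] \in I0. Proof. by apply: (inL8 (i:=i) (c:=c) (c':=c')); rewrite /L8icc !in_cons eqxx ?orbT. Qed.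
Lemma inV6 i c c' : mk true (nv (NV i c c')) (nv (NO Ob)) [set HP (Eta i c)] \in I0. Proof. by apply: (inL8 (i:=i) (c:=c) (c':=c')); rewrite /L8icc !in_cons eqxx ?orbT. Qed.
Lemma inV7 i c c' : mk true (nv (NV i c c')) (nv (NO Ob)) [set HP (Eta i c')] \in I0. Proof. by apply: (inL8 (i:=i) (c:=c) (c':=c')); rewrite /L8icc !in_cons eqxx ?orbT. Qed.
Lemma inV8 i c c' : mk false (nv (NV i c c')) (nv (NO O0)) set0 \in I0. Proof. by apply: (inL8 (i:=i) (c:=c) (c':=c')); rewrite /L8icc !in_cons eqxx ?orbT. Qed.
Hypothesis Hbnd : forall i c h, (pos (ncoef i c h) <= Nu)%N /\ (neg (ncoef i c h) <= Nu)%N.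

Definition xv a := z (nv NP) (HP (Chi a)).
Definition yv i c := z (nv NP) (HP (Eta i c)).

Lemma hold_false (x y : NH d) : mk false (nv x) (nv y) set0 \in I0 -> x != y ->
  s (nv x) (nv y) != 0.
Proof. by move=> hI xy; apply/(vci_false0 S); apply: hold => //; apply: wf_NN. Qed.

Lemma hold_true0 (x y : NH d) : mk true (nv x) (nv y) set0 \in I0 -> x != y ->
  s (nv x) (nv y) = 0.
Proof. by move=> hI xy; apply/(vci_true0 S); apply: hold => //; apply: wf_NN. Qed.

Lemma sTO_neq0 o : sTO o != 0. Proof. exact: f4. Qed.

Lemma fP : xv a0 != 0.
Proof.
have hI : mk true (nv NP) (nv (NO O0)) [set HP (Chi a0)] \in I0.
  by apply: inL6; rewrite in_cons eqxx.
have hF : mk false (nv NP) (nv (NO O0)) set0 \in I0.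
  by apply: inL6; rewrite !in_cons eqxx orbT.
have := hold_false hF isT; rewrite (KLO hI isT) big_set1.
by rewrite mulf_eq0 negb_or => /andP[].
Qed.

Lemma sum2 (G : HubT -> R) a b : a != b -> \sum_(h in [set a; b]) G h = G a + G b.
Proof. by move=> ab; rewrite big_setU1 ?big_set1 // in_set1. Qed.

Lemma fC i c : D%:R * yv i c = \sum_a (N i c a)%:~R * xv a.
Proof.
pose u := s (nv (NC i c)) (nv (NO O0)) / sTO O0.
have hu j : z (nv (NC i c)) (HU j) = u.
  rewrite /u (KLO (inC1 i c j) isT) big_set1; field; exact: sTO_neq0.
have u0 : u != 0.
  by rewrite /u mulf_neq0 ?invr_eq0 ?sTO_neq0 // hold_false // inC2.
have hc h : z (nv (NC i c)) (HP h) = (ncoef i c h)%:~R * u.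
  have [bp bn] := Hbnd i c h.
  have e5 := KLO (inC5 i c h) isT; have e6 := KLO (inC6 i c h) isT.
  rewrite big_setU1 ?HP_notin_U //= (sum_Uset bn hu) in e5.
  rewrite (sum_Uset bp hu) e5 in e6.
  have := mulfI (sTO_neq0 (Oh h)) e6 => e.
  by rewrite pos_neg mulrBl !mulr_natl -e addrK.
have e3 := hold_true0 (inC3 i c) isT.
rewrite (KL (inC4 i c) isT) in e3.
move: e3 => /eqP; rewrite mulf_eq0 (negbTE m_neq0) /= => /eqP.
rewrite /PHset big_imset /=; last by move=> x y _ _ [].
rewrite (eq_bigr (fun h => z (nv NP) (HP h) * ((ncoef i c h)%:~R * u))); last by move=> h _; rewrite hc.
rewrite sum_PH.
have -> : \sum_i0 \sum_c0 z (nv NP) (HP (Eta i0 c0)) * ((ncoef i c (Eta i0 c0))%:~R * u)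
   = yv i c * (D%:R * u).
  rewrite (bigD1 i) //= (bigD1 c) //= big1 => [|c' c'c]; last first.
    by rewrite /= eqxx /= (negbTE c'c) mul0r mulr0.
  rewrite big1 => [|i' i'i]; last first.
    by apply: big1 => c' _; rewrite /= (negbTE i'i) mul0r mulr0.
  by rewrite /= !eqxx /= !addr0.
move=> e; apply: (mulIf u0); rewrite mulr_suml.
have e' : \sum_a z (nv NP) (HP (Chi a)) * ((ncoef i c (Chi a))%:~R * u) =
    - \sum_a (N i c a)%:~R * xv a * u.
  rewrite -sumrN; apply: eq_bigr => a _ /=; rewrite /xv mulrNz; ring.
move/eqP: e; rewrite e' addrC subr_eq0 => /eqP e; rewrite -e; ring.
Qed.

Lemma fV i c c' : xv c * yv i c' = xv c' * yv i c.
Proof.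
have e1 := hold_true0 (inV1 i c c') isT.
have e2 := KL (inV2 i c c') isT; rewrite sum2 // e1 in e2.
have e3 := KL (inV3 i c c') isT; rewrite sum2 // e1 in e3.
have e4 := KLO (inV4 i c c') isT; rewrite big_set1 in e4.
have e5 := KLO (inV5 i c c') isT; rewrite big_set1 e4 in e5.
have e6 := KLO (inV6 i c c') isT; rewrite big_set1 in e6.
have e7 := KLO (inV7 i c c') isT; rewrite big_set1 e6 in e7.
have nz := hold_false (inV8 i c c') isT; rewrite e4 mulf_eq0 negb_or sTO_neq0 /= in nz.
have {}e5 := mulfI (sTO_neq0 O0) e5.
have {}e7 := mulfI (sTO_neq0 Ob) e7.
move: e2 e3; rewrite -e5 -e7 => /esym/eqP; rewrite mulf_eq0 (negbTE m_neq0) /= => /eqP e2.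
move=> /esym/eqP; rewrite mulf_eq0 (negbTE m_neq0) /= => /eqP e3.
apply: (mulIf nz); rewrite /xv /yv.
set X := z (nv NP) _ in e2 *; set Y := z (nv NP) _ in e2 *.
set X' := z (nv NP) _ in e3 *; set Y' := z (nv NP) _ in e3 *.
set sv := z _ (HP (Chi c)) in e2 e3 nz *; set tv := z _ _ in e2 e3 *.
have h2 : X * sv = - (Y * tv) by apply/eqP; rewrite -addr_eq0 e2.
have h3 : X' * sv = - (Y' * tv) by apply/eqP; rewrite -addr_eq0 e3.
rewrite [X * Y' * sv]mulrAC h2 [X' * Y * sv]mulrAC h3; ring.
Qed.

Theorem forcing : exists (x : 'I_d -> R) (y : 'I_d -> 'I_d -> R),
  [/\ forall a, in_gen_subfield (entries S) (x a),
      forall i c, in_gen_subfield (entries S) (y i c),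
      x a0 != 0,
      forall i c, D%:R * y i c = \sum_a (N i c a)%:~R * x a
    & forall i c c', x c * y i c' = x c' * y i c].
Proof.
exists xv, yv; split.
- move=> a; apply: igs_div; apply: igs_base; eexists; eexists; reflexivity.
- move=> i c; apply: igs_div; apply: igs_base; eexists; eexists; reflexivity.
- exact: fP.
- exact: fC.
- exact: fV.
Qed.
End Forcing.
Section Witness.
Variable R : realType.
Variables (x : 'I_d -> R) (y : 'I_d -> 'I_d -> R) (lam : 'I_d -> R).
Hypothesis xa0 : x a0 != 0.
Hypothesis hy : forall i c, y i c = lam i * x c.
Hypothesis lam_nz : forall i, lam i != 0.
Hypothesis hD : forall i c, D%:R * y i c = \sum_a (N i c a)%:~R * x a.
Hypothesis Hbnd : forall i c h, (pos (ncoef i c h) <= Nu)%N /\ (neg (ncoef i c h) <= Nu)%N.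

Definition tt i := - (lam i)^-1.

Definition X (u : NH d) (h : HubT) : R :=
  match u with
  | NT => 1 | NO _ => 1
  | NP => match h with HP (Chi a) => x a | HP (Eta i c) => y i c | HU _ => 0 end
  | NC i c => match h with HP p => (ncoef i c p)%:~R | HU _ => 1 end
  | NV i c c' => match h with
      | HP (Chi e) => ((e == c) || (e == c'))%:R
      | HP (Eta i' e) => ((i' == i) && ((e == c) || (e == c')))%:R * tt i
      | HU _ => 0 end
  end.

Definition f (u v : NH d) : R :=
  match u, v with
  | NT, NO _ => 1
  | NO O0, NO Ob => 1
  | NP, NO O0 => x a0
  | NC _ _, NO O0 => 1
  | NC i c, NO (Oh h) => (pos (ncoef i c h))%:R
  | NV _ _ _, NO O0 => 1
  | NV i _ _, NO Ob => tt i
  | _, _ => 0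
  end.

Definition XX (k l : NH d) := \sum_h X k h * X l h.
Definition gg (k l : NH d) := f k l - XX k l / 2.

Definition Dir := (HubT + (NH d * NH d))%type.
Definition W (r : Dir) (w : V) : R :=
  match r, w with
  | inl h, inl h' => (h == h')%:R
  | inl h, inr u => X u h
  | inr _, inl _ => 0
  | inr (k, l), inr u => (u == k)%:R * gg k l + (u == l)%:R
  end.

Definition Mw : 'M[R]_(#|{: Dir}|, nn) := \matrix_(r, a) W (enum_val r) (enum_val a).
Definition Sw := Mw^T *m Mw.
Local Notation s u v := (Sw (enc u) (enc v)).

Lemma Sw_entry u v : s u v = \sum_(r : Dir) W r u * W r v.
Proof.
rewrite !mxE (big_enum_val (fun r => W r u * W r v)) /=.
by apply: eq_bigr => r _; rewrite !mxE /enc !enum_rankK.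
Qed.

Lemma sum_ind (T : finType) (j : T) (c : R) : \sum_(i : T) (i == j)%:R * c = c.
Proof.
rewrite (bigD1 j) //= eqxx mul1r big1 ?addr0 // => i /negbTE ->; by rewrite mul0r.
Qed.

Lemma sHH h h' : s (hv h) (hv h') = (h == h')%:R.
Proof.
rewrite Sw_entry big_sumType /= [Z in _ + Z]big1 ?addr0 => [|p _]; last by case: p => ? ?; rewrite mul0r.
rewrite (eq_bigr (fun h'' => (h'' == h)%:R * (h == h')%:R)) ?sum_ind //.
by move=> h'' _; have [->|] := eqVneq h'' h; rewrite ?mul0r.
Qed.

Lemma sNH u h : s (nv u) (hv h) = X u h.
Proof.
rewrite Sw_entry big_sumType /= [Z in _ + Z]big1 ?addr0 => [|p _]; last by case: p => ? ?; rewrite mulr0.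
rewrite (eq_bigr (fun h'' => (h'' == h)%:R * X u h)) ?sum_ind //.
by move=> h'' _ /=; have [->|] := eqVneq h'' h; rewrite ?mulr0 ?mul0r ?mulr1 ?mul1r.
Qed.

Lemma sHN u h : s (hv h) (nv u) = X u h.
Proof.
rewrite Sw_entry big_sumType /= [Z in _ + Z]big1 ?addr0 => [|p _]; last by case: p => ? ?; rewrite mul0r.
rewrite (eq_bigr (fun h'' => (h'' == h)%:R * X u h)) ?sum_ind //.
by move=> h'' _ /=; have [->|] := eqVneq h'' h; rewrite ?mulr0 ?mul0r ?mulr1 ?mul1r.
Qed.

Lemma ptw (u v k l : NH d) (G : R) : u != v ->
  ((u == k)%:R * G + (u == l)%:R) * ((v == k)%:R * G + (v == l)%:R) =
  (((k, l) == (u, v))%:R + ((k, l) == (v, u))%:R) * G.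
Proof.
move=> uv; have vu : v != u by rewrite eq_sym.
rewrite !xpair_eqE.
have [<-{k}|ku] := eqVneq u k;
  have [<-{l}|lv] := eqVneq v l; rewrite ?eqxx ?(negbTE uv) ?(negbTE vu) /=;
  try (by ring).
- by rewrite andbF /=; ring.
- by rewrite (eq_sym k v) (eq_sym l u); case: (v == k); case: (u == l); rewrite /=; ring.
Qed.

Lemma sNN u v : u != v -> s (nv u) (nv v) = f u v + f v u.
Proof.
move=> uv; rewrite Sw_entry big_sumType /=.
rewrite (eq_bigr (fun p : NH d * NH d => (p == (u, v))%:R * gg u v + (p == (v, u))%:R * gg v u)); last first.
  case=> k l _ /=; rewrite ptw // mulrDl.
  by congr (_ + _); have [[-> ->]|] := eqVneq (k, l) _; rewrite ?mul0r.
rewrite big_split /= !sum_ind.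
have -> : \sum_h W (inl h) (nv u) * W (inl h) (nv v) = XX u v by [].
rewrite /gg.
have -> : XX v u = XX u v by apply: eq_bigr => h _; rewrite mulrC.
by field.
Qed.
Lemma Sw_psd : psd Sw.
Proof.
split; first by rewrite /Sw trmx_mul trmxK.
move=> w; have -> : w^T *m (Mw^T *m Mw) *m w = (Mw *m w)^T *m (Mw *m w).
  by rewrite trmx_mul !mulmxA.
rewrite !mxE; apply: sumr_ge0 => r _; rewrite mxE -expr2.
exact: sqr_ge0.
Qed.

Lemma horthW h h' : h != h' -> s (hv h) (hv h') = 0.
Proof. by move=> hh; rewrite sHH (negbTE hh). Qed.
Lemma hdiagW h : s (hv h) (hv h) != 0.
Proof. by rewrite sHH eqxx oner_neq0. Qed.

Lemma holdsW (u v : NH d) (A : {set HubT}) : u != v ->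
  f u v + f v u = \sum_(h in A) X u h * X v h ->
  constraint_holds Sw (mk true (nv u) (nv v) A).
Proof.
move=> uv e; apply/(vci_true horthW hdiagW); rewrite sNN // e.
by apply: eq_bigr => h _; rewrite sNH sHN sHH eqxx divr1.
Qed.

Lemma holdsWf (u v : NH d) : u != v -> f u v + f v u != 0 ->
  constraint_holds Sw (mk false (nv u) (nv v) set0).
Proof. by move=> uv e; apply/(vci_false0 Sw); rewrite sNN. Qed.
Lemma sum2' (G : HubT -> R) a b : a != b -> \sum_(h in [set a; b]) G h = G a + G b.
Proof. by move=> ab; rewrite big_setU1 ?big_set1 // in_set1. Qed.

Theorem witness : in_sd_model II Sw.
Proof.
split; first exact: Sw_psd.
move=> cc; rewrite mem_filter => /andP[wf]; rewrite /I0 !mem_cat.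
case/orP => [/allpairsPdep[h [h' [_ hh' ->]]]|].
  apply/(vci_true0 Sw); apply: horthW; move: hh'; rewrite mem_filter => /andP[].
  by rewrite eq_sym.
case/orP => [/mapP[h _ ->]|].
  by apply/(vci_false0 Sw); rewrite sNH /= oner_neq0.
case/orP => [/allpairsP[[o h] [_ _ ->]]|] /=.
  by apply: holdsW => //; rewrite big_set1; case: o => *; rewrite /= addr0 mulr1.
case/orP => [/mapP[o _ ->]|].
  by apply: holdsWf => //; case: o => *; rewrite /= addr0 oner_neq0.
case/orP => [/mapP[h _ ->]|].
  by apply: holdsW => //; rewrite big_set1 /= addr0 mulr1.
case/orP => [|].
  rewrite !in_cons in_nil orbF => /orP[] /eqP ->.
    by apply: holdsW => //; rewrite big_set1 /= addr0 mulr1.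
  by apply: holdsWf => //; rewrite /= addr0.
case/orP => [/flatten_mapP[[i c] _]|].
  rewrite /L7ic !mem_cat /=.
  case/orP => [/mapP[j _ ->]|].
    by apply: holdsW => //; rewrite big_set1 /= addr0 mulr1.
  case/orP => [|].
    rewrite !in_cons in_nil orbF => /or3P[] /eqP ->.
    - by apply: holdsWf => //; rewrite /= addr0 oner_neq0.
    - by apply: holdsW => //; rewrite big_set0 /= addr0.
    - apply: holdsW => //; rewrite /= addr0 /PHset big_imset /=; last by move=> ? ? _ _ [].
      rewrite sum_PH /=.
      have -> : \sum_i0 \sum_c0 y i0 c0 * (if (i0 == i) && (c0 == c) then D%:Z else 0)%:~R
          = y i c * D%:R.
        rewrite (bigD1 i) //= (bigD1 c) //= big1 => [|c' c'c]; last first.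
          by rewrite /= eqxx /= (negbTE c'c) mulr0.
        rewrite big1 => [|i' i'i]; last first.
          by apply: big1 => c' _; rewrite /= (negbTE i'i) mulr0.
        by rewrite /= !eqxx /= !addr0.
      rewrite (mulrC (y i c)) hD -big_split /=; apply/esym; apply: big1 => a _.
      rewrite mulrNz; ring.
  case/orP => [/mapP[h _ ->]|/mapP[h _ ->]]; apply: holdsW => //=; rewrite addr0.
  - have [_ bn] := Hbnd i c h.
    rewrite big_setU1 ?HP_notin_U //= (@sum_Uset _ _ _ 1 bn (fun _ => mulr1 1)) mulr1.
    by rewrite pos_neg subrK.
  - have [bp _] := Hbnd i c h.
    by rewrite (@sum_Uset _ _ _ 1 bp (fun _ => mulr1 1)).
case/flatten_mapP => [[[i c] c'] _] /=.
rewrite /L8icc !in_cons in_nil orbF.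
case/orP => [/eqP->|]; first by apply: holdsW => //; rewrite big_set0 /= addr0.
case/orP => [/eqP->|].
  apply: holdsW => //; rewrite sum2' //= !eqxx /= addr0 hy /tt; field.
  exact: lam_nz.
case/orP => [/eqP->|].
  apply: holdsW => //; rewrite sum2' //= !eqxx orbT /= addr0 hy /tt; field.
  exact: lam_nz.
case/orP => [/eqP->|].
  by apply: holdsW => //; rewrite big_set1 /= !eqxx /= addr0 mulr1.
case/orP => [/eqP->|].
  by apply: holdsW => //; rewrite big_set1 /= !eqxx orbT /= addr0 mulr1.
case/orP => [/eqP->|].
  by apply: holdsW => //; rewrite big_set1 /= !eqxx /= addr0 !mulr1 mul1r.
case/orP => [/eqP->|].
  by apply: holdsW => //; rewrite big_set1 /= !eqxx orbT /= addr0 !mulr1 mul1r.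
move/eqP->; by apply: holdsWf => //; rewrite /= addr0 oner_neq0.
Qed.
End Witness.
End Construction.
Lemma denom_lemma (T : finType) (q : T -> rat) :
  exists D : nat, (0 < D)%N /\ exists N : T -> int, forall t, (N t)%:~R = D%:R * q t.
Proof.
pose D := (\prod_t `|denq (q t)|)%N.
have dq t : `|denq (q t)|%:R = (denq (q t))%:~R :> rat.
  by rewrite -[X in _ = X%:~R]gtz0_abs ?denq_gt0.
exists D; split.
  by rewrite prodn_gt0 // => t; rewrite absz_gt0 denq_neq0.
exists (fun t => numq (q t) * (\prod_(t' | t' != t) `|denq (q t')|)%N%:Z) => t.
set P := (\prod_(t' | t' != t) `|denq (q t')|)%N.
have eD : D = (`|denq (q t)| * P)%N by rewrite /D (bigD1 t).
rewrite rmorphM /= numqE eD natrM dq -pmulrn; ring.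
Qed.

Section Embed.
Variables (R : numFieldType) (K : fieldExtType rat).
Local Notation d := (\dim (fullv : {vspace K})).
Local Notation B := (vbasis (fullv : {vspace K})).
Variables (x : 'I_d -> R) (a0 : 'I_d).
Hypothesis xa0 : x a0 != 0.

Definition Lf (w : K) : R := \sum_a ratr (coord B a w) * x a.

Lemma Lf_add w1 w2 : Lf (w1 + w2) = Lf w1 + Lf w2.
Proof. by rewrite /Lf -big_split; apply: eq_bigr => a _; rewrite raddfD rmorphD mulrDl. Qed.
Lemma Lf0 : Lf 0 = 0.
Proof. by rewrite /Lf big1 // => a _; rewrite raddf0 rmorph0 mul0r. Qed.
Lemma Lf_opp w : Lf (- w) = - Lf w.
Proof. by rewrite /Lf -sumrN; apply: eq_bigr => a _; rewrite raddfN rmorphN mulNr. Qed.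
Lemma LfZ q w : Lf (q *: w) = ratr q * Lf w.
Proof. by rewrite /Lf mulr_sumr; apply: eq_bigr => a _; rewrite linearZ /= rmorphM mulrA. Qed.
Lemma Lf_sum (I : finType) (F : I -> K) : Lf (\sum_i F i) = \sum_i Lf (F i).
Proof. exact: (big_morph Lf Lf_add Lf0). Qed.
Lemma free_B : free B. Proof. exact: basis_free (vbasisP _). Qed.
Lemma LfB (c : 'I_d) : Lf B`_c = x c.
Proof.
rewrite /Lf (bigD1 c) //= coord_free ?free_B // eqxx rmorph1 mul1r big1 ?addr0 //.
by move=> a ac; rewrite coord_free ?free_B // eq_sym (negbTE ac) rmorph0 mul0r.
Qed.
Lemma expandB w : w = \sum_i coord B i w *: B`_i.
Proof. exact: coord_vbasis (memvf w). Qed.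

Hypothesis hE : forall i c c' : 'I_d, x c * Lf (B`_i * B`_c') = x c' * Lf (B`_i * B`_c).

Definition lam (i : 'I_d) := Lf (B`_i * B`_a0) / x a0.

Lemma hL (i : 'I_d) w : Lf (B`_i * w) = lam i * Lf w.
Proof.
have -> : Lf w = \sum_c Lf (coord B c w *: B`_c) by rewrite -Lf_sum -expandB.
rewrite {1}(expandB w) mulr_sumr Lf_sum mulr_sumr.
apply: eq_bigr => c _; rewrite -scalerAr !LfZ LfB.
have e := hE i c a0.
rewrite /lam; have -> : Lf (B`_i * B`_c) = x c * Lf (B`_i * B`_a0) / x a0.
  by rewrite e [x a0 * _]mulrC mulfK.
by field.
Qed.

Definition Lam (w : K) : R := \sum_i ratr (coord B i w) * lam i.

Lemma hLam w v : Lf (w * v) = Lam w * Lf v.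
Proof.
rewrite {1}(expandB w) mulr_suml Lf_sum /Lam mulr_suml.
by apply: eq_bigr => i _; rewrite -scalerAl LfZ hL mulrA.
Qed.

Lemma L1_neq0 : Lf 1 != 0.
Proof.
apply/negP => /eqP L10; move: xa0; rewrite -LfB -[B`_a0]mulr1 hLam L10 mulr0.
by rewrite eqxx.
Qed.

Definition gfun (w : K) : R := Lf w / Lf 1.

Lemma gfun_zmod : zmod_morphism gfun.
Proof. by move=> u v; rewrite /gfun Lf_add Lf_opp mulrBl. Qed.

Lemma gfun_monoid : monoid_morphism gfun.
Proof.
split; first by rewrite /gfun divff // L1_neq0.
move=> u v; rewrite /gfun hLam.
have -> : Lf u = Lam u * Lf 1 by rewrite -hLam mulr1.
have := L1_neq0 => h; field; exact: h.
Qed.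

Definition gmor : {rmorphism K -> R} :=
  HB.pack_for {rmorphism K -> R} gfun
    (GRing.isZmodMorphism.Build K R gfun gfun_zmod)
    (GRing.isMonoidMorphism.Build K R gfun gfun_monoid).

Lemma gmorE w : gmor w = Lf w / Lf 1. Proof. by []. Qed.
End Embed.
Lemma pos_le (z : int) : (pos z <= `|z|)%N. Proof. by case: z. Qed.
Lemma neg_le (z : int) : (neg z <= `|z|)%N. Proof. by case: z. Qed.

Unset Implicit Arguments.
Theorem corollary6p2 (R : realType) (K : fieldExtType rat) :
  (exists phi : {rmorphism K -> R}, True) ->
  exists (n : nat) (I : seq (ci_constraint n)),
    [/\ all (@ci_wf n) I,
        exists S : 'M[R]_n, in_sd_model I S
      & forall S : 'M[R]_n, in_sd_model I S ->
          exists g : {rmorphism K -> R},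
            forall x : K, in_gen_subfield (entries S) (g x)].
Proof.
case=> phi _.
pose B := vbasis (fullv : {vspace K}).
have d0 : (0 < \dim (fullv : {vspace K}))%N.
  rewrite lt0n dimv_eq0; apply/eqP => f0; have := memvf (1 : K).
  by rewrite f0 memv0 oner_eq0.
pose a0 := Ordinal d0.
pose M (t : 'I_(\dim (fullv : {vspace K})) * 'I_(\dim (fullv : {vspace K})) * 'I_(\dim (fullv : {vspace K}))) : rat :=
  coord B t.2 (B`_t.1.1 * B`_t.1.2).
have [D [D0 [Nt hN]]] := denom_lemma M.
pose N i c a := Nt (i, c, a).
pose Nu := (D + \sum_t `|Nt t|)%N.
have HNt t : (`|Nt t| <= Nu)%N by rewrite /Nu (bigD1 t) //= addnCA leq_addr.
have Hbnd i c h : (pos (ncoef D N i c h) <= Nu)%N /\ (neg (ncoef D N i c h) <= Nu)%N.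
  have H z : (`|z| <= Nu)%N -> (pos z <= Nu)%N /\ (neg z <= Nu)%N.
    by move=> hz; split; apply: leq_trans hz; [apply: pos_le | apply: neg_le].
  apply: H; case: h => [a|i' c'] /=; first by rewrite abszN; apply: HNt.
  by case: ifP => _ //=; rewrite /Nu leq_addr.
have hNR (t : _) : (Nt t)%:~R = D%:R * ratr (M t) :> R.
  by rewrite -ratr_int hN rmorphM /= ratr_nat.
have Bnz (a : 'I_(\dim (fullv : {vspace K}))) : B`_a != 0.
  by apply: (free_not0 (free_B K)); apply: mem_nth; rewrite size_tuple.
exists (nn (\dim (fullv : {vspace K})) Nu), (II Nu D N a0); split.
- exact: II_wf.
- exists (Sw Nu D N a0 (fun a => phi B`_a) (fun i c => phi (B`_i * B`_c)) (fun i => phi B`_i)).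
  apply: witness => //.
  + by rewrite fmorph_eq0 Bnz.
  + by move=> i c; rewrite rmorphM.
  + by move=> i; rewrite fmorph_eq0 Bnz.
  + move=> i c; rewrite {1}(expandB (B`_i * B`_c)) rmorph_sum mulr_sumr.
    by apply: eq_bigr => a _; rewrite rmorphZ_num mulrA /N hNR.
- move=> S HS; have [x [y [Hx Hy xa0 hD hE]]] := forcing HS Hbnd.
  have DR : (D%:R : R) != 0 by rewrite pnatr_eq0 -lt0n.
  have hyc i c : y i c = Lf x (B`_i * B`_c).
    apply: (mulfI DR); rewrite hD /Lf mulr_sumr; apply: eq_bigr => a _.
    by rewrite /N hNR -mulrA.
  have hE' : forall i c c' : 'I_(\dim (fullv : {vspace K})), x c * Lf x (B`_i * B`_c') = x c' * Lf x (B`_i * B`_c).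
    by move=> i c c'; rewrite -!hyc.
  exists (gmor xa0 hE') => w; rewrite gmorE.
  by apply: igs_div; apply: igs_sum => a; apply: igsM => //; apply: igs_rat.
Qed.
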